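(* Let $T$ be a complete theory with monster model $\mathcal{U}$, $A\subseteq\mathcal{U}$ small, $b$ a finite tuple from $\mathcal{U}$, $\mu\in\mathfrak{M}_x(\mathcal{U})$, $\nu\in\mathfrak{M}_y(\mathcal{U})$, and $\varphi(y,b)\in\mathcal{L}_y(b)$ with $0<\nu(\varphi(y,b))<1$. If $\mu\blacktriangleright_A\nu$, then $\mu\blacktriangleright_{Ab}\nu_{[\varphi]}$.
   Context: For $C\subseteq\mathcal{U}$, $\mathcal{L}_x(C)$ is the Boolean algebra of formulas in $x$ with parameters from $C$ modulo $T$, embedded in $\mathcal{L}_{xy}(C)$ via $\varphi(x)\mapsto\varphi(x)\wedge y=y$; $\mathfrak{M}_x(C)$ is the set of finitely additive probability measures on $\mathcal{L}_x(C)$. For $\omega\in\mathfrak{M}_{xy}(C)$, $\pi_x(\omega)(\varphi(x))=\omega(\varphi(x)\wedge y=y)$ (similarly $\pi_y$); $\omega|_D$ is restriction. $\mathfrak{M}^{\mathrm{Am}}_{xy}(C)$ is the set of $\lambda\in\mathfrak{M}_{xy}(C)$ with $\lambda(\varphi(x)\wedge\psi(y))=\pi_x(\lambda)(\varphi(x))\pi_y(\lambda)(\psi(y))$ for all $\varphi(x)\in\mathcal{L}_x(C),\psi(y)\in\mathcal{L}_y(C)$. For $\lambda\in\mathfrak{M}^{\mathrm{Am}}_{xy}(A)$ with $\pi_x(\lambda)=\mu|_A$: $\operatorname{Amal}(\lambda,\mu)=\{\omega\in\mathfrak{M}^{\mathrm{Am}}_{xy}(\mathcal{U}):\omega|_A=\lambda,\pi_x(\omega)=\mu\}$.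 $\mu\blacktriangleright_A\nu$ means there is $\lambda\in\mathfrak{M}_{xy}(A)$ with $\pi_x(\lambda)=\mu|_A$, $\operatorname{Amal}(\lambda,\mu)\neq\emptyset$, and $\pi_y(\omega)=\nu$ for every $\omega\in\operatorname{Amal}(\lambda,\mu)$. $Ab$ denotes $A$ together with the entries of $b$. The localization is $\nu_{[\varphi]}(\psi(y))=\nu(\varphi(y,b)\wedge\psi(y))/\nu(\varphi(y,b))$. *)

(* Defs.v *)
From Stdlib Require Import Reals List.
From mathcomp Require Import all_boot.

Set Implicit Arguments.
Unset Strict Implicit.
Unset Printing Implicit Defensive.

Record lang := Lang {
  fsym : Type; far : fsym -> nat;
  rsym : Type; rar : rsym -> nat }.

Inductive term (L : lang) : Type :=
  | tvar : nat -> term L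
  | tapp : forall f : fsym L, ('I_(far f) -> term L) -> term L.

Inductive formula (L : lang) : Type :=
  | fFalse : formula L
  | fEq : term L -> term L -> formula L
  | fRel : forall r : rsym L, ('I_(rar r) -> term L) -> formula L
  | fImp : formula L -> formula L -> formula L
  | fAll : nat -> formula L -> formula L.

Record structure (L : lang) := Structure {
  carrier :> Type;
  funI : forall f : fsym L, ('I_(far f) -> carrier) -> carrier;
  relI : forall r : rsym L, ('I_(rar r) -> carrier) -> Prop }.

Section Semantics.
Variables (L : lang) (M : structure L).

Fixpoint eval (e : nat -> M) (t : term L) : M :=
  match t with
  | tvar i => e i
  | tapp f ts => funI (fun j => eval e (ts j))
  end.

Definition upd (e : nat -> M) (i : nat) (a : M) : nat -> M :=
  fun j => if j == i then a else e j.

Fixpoint sat (e : nat -> M) (p : formula L) : Prop :=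
  match p with
  | fFalse => False
  | fEq t1 t2 => eval e t1 = eval e t2
  | fRel r ts => relI (fun j => eval e (ts j))
  | fImp p q => sat e p -> sat e q
  | fAll i p => forall a : M, sat (upd e i a) p
  end.

Definition assign (s : seq M) (e0 : nat -> M) : nat -> M :=
  fun i => nth (e0 i) s i.

(* X (a set of tuples encoded by enc) is definable with parameters from C:
   it is the solution set in M of a formula phi(v, c) with c from C,
   independently of the values of any other variables. *)
Definition Definable {V : Type} (enc : V -> seq M) (C : M -> Prop)
  (X : V -> Prop) : Prop :=
  exists (p : formula L) (c : seq M),
    (forall z, List.In z c -> C z) /\
    forall (v : V) (e0 : nat -> M), X v <-> sat (assign (enc v ++ c) e0) p.

Definition defx (n : nat) (C : M -> Prop) (X : n.-tuple M -> Prop) :=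
  Definable (fun t : n.-tuple M => tval t) C X.
Definition defxy (n m : nat) (C : M -> Prop)
  (X : n.-tuple M * m.-tuple M -> Prop) :=
  Definable (fun p : n.-tuple M * m.-tuple M => tval p.1 ++ tval p.2) C X.

(* finitely additive probability measures on the Boolean algebra of
   C-definable sets (= formulas modulo T with parameters in C) *)
Definition is_kmeasure {V : Type} (D : (V -> Prop) -> Prop)
  (mu : (V -> Prop) -> R) : Prop :=
  (forall X Y, D X -> D Y -> (forall v, X v <-> Y v) -> mu X = mu Y) /\
  (forall X, D X -> Rle R0 (mu X)) /\
  mu (fun _ => True) = R1 /\
  (forall X Y, D X -> D Y -> (forall v, ~ (X v /\ Y v)) ->
     mu (fun v => X v \/ Y v) = Rplus (mu X) (mu Y)).

Definition agree {V : Type} (D : (V -> Prop) -> Prop)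
  (mu1 mu2 : (V -> Prop) -> R) : Prop :=
  forall X, D X -> mu1 X = mu2 X.

Definition setTM : M -> Prop := fun _ => True.

Definition pi_x (n m : nat) (w : (n.-tuple M * m.-tuple M -> Prop) -> R)
  : (n.-tuple M -> Prop) -> R := fun X => w (fun p => X p.1).
Definition pi_y (n m : nat) (w : (n.-tuple M * m.-tuple M -> Prop) -> R)
  : (m.-tuple M -> Prop) -> R := fun Y => w (fun p => Y p.2).

Definition is_am (n m : nat) (C : M -> Prop)
  (w : (n.-tuple M * m.-tuple M -> Prop) -> R) : Prop :=
  is_kmeasure (defxy C) w /\
  forall X Y, defx C X -> defx C Y ->
    w (fun p => X p.1 /\ Y p.2) = Rmult (pi_x w X) (pi_y w Y).

Definition Amal (n m : nat) (A : M -> Prop)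
  (lam : (n.-tuple M * m.-tuple M -> Prop) -> R)
  (mu : (n.-tuple M -> Prop) -> R)
  (w : (n.-tuple M * m.-tuple M -> Prop) -> R) : Prop :=
  is_am setTM w /\ agree (defxy A) w lam /\ agree (defx setTM) (pi_x w) mu.

Definition tri (n m : nat) (A : M -> Prop)
  (mu : (n.-tuple M -> Prop) -> R) (nu : (m.-tuple M -> Prop) -> R) : Prop :=
  exists lam : (n.-tuple M * m.-tuple M -> Prop) -> R,
    is_kmeasure (defxy A) lam /\
    agree (defx A) (pi_x lam) mu /\
    (exists w, Amal A lam mu w) /\
    (forall w, Amal A lam mu w -> agree (defx setTM) (pi_y w) nu).

Definition addparams (A : M -> Prop) (b : seq M) : M -> Prop :=
  fun z => A z \/ List.In z b.

Definition localize (m : nat) (nu : (m.-tuple M -> Prop) -> R)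
  (Phi : m.-tuple M -> Prop) : (m.-tuple M -> Prop) -> R :=
  fun Psi => Rdiv (nu (fun v => Phi v /\ Psi v)) (nu Phi).

End Semantics.

(* Main.v *)
Require Import Defs.
From Stdlib Require Import Reals List.
From mathcomp Require Import all_boot zify.
From Stdlib Require Import FunctionalExtensionality PropExtensionality Classical Lia.

Set Implicit Arguments.
Unset Strict Implicit.

Section Ren.
Variables (L : lang) (M : structure L).

Fixpoint tren (s : nat -> nat) (t : term L) : term L :=
  match t with
  | tvar i => tvar L (s i)
  | tapp f ts => @tapp L f (fun j => tren s (ts j))
  end.

Fixpoint fren (s : nat -> nat) (p : formula L) : formula L :=
  match p with
  | fFalse => fFalse L
  | fEq a b => fEq (tren s a) (tren s b)
  | fRel r ts => @fRel L r (fun j => tren s (ts j))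
  | fImp p q => fImp (fren s p) (fren s q)
  | fAll i p => fAll (s i) (fren s p)
  end.

Lemma eval_ren s (e : nat -> M) t : eval e (tren s t) = eval (fun j => e (s j)) t.
Proof.
induction t as [i|f ts IH] => //=.
f_equal; apply functional_extensionality => j; exact: IH.
Qed.

Lemma sat_ren s (sinj : injective s) p : forall (e : nat -> M),
  sat e (fren s p) <-> sat (fun j => e (s j)) p.
Proof.
induction p as [|a b|r ts|p IHp q IHq|i p IHp] => e /=.
- tauto.
- rewrite !eval_ren; tauto.
- have -> : (fun j => eval e (tren s (ts j))) = (fun j => eval (fun k => e (s k)) (ts j)).
    by apply functional_extensionality => j; rewrite eval_ren.
  tauto.
- rewrite IHp IHq; tauto.
- split => H a; move: (H a); rewrite IHp;
  (have -> : (fun j => upd e (s i) a (s j)) = upd (fun j => e (s j)) i a); try done;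
  apply functional_extensionality => j; rewrite /upd;
  (case: (eqVneq j i) => [->|ne]; [by rewrite eqxx|]);
  (have -> : (s j == s i) = false by apply/negbTE; apply: contra ne => /eqP/sinj ->);
  done.
Qed.

Definition fAnd (p q : formula L) : formula L :=
  fImp (fImp p (fImp q (fFalse L))) (fFalse L).

Lemma sat_and (e : nat -> M) p q : sat e (fAnd p q) <-> sat e p /\ sat e q.
Proof. rewrite /fAnd /=; split; [|tauto] => H; apply NNPP => H'; apply H => a b; tauto. Qed.

Lemma assign_app (s t : seq M) e0 : assign s (assign (s ++ t) e0) = assign (s ++ t) e0.
Proof.
apply functional_extensionality => i; rewrite /assign.
case: (ltnP i (size s)) => hi; first by rewrite nth_cat hi; apply: set_nth_default.
by rewrite (nth_default _ hi).
Qed.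

Lemma assign_shift (s c1 c2 : seq M) k e0 : size s = k ->
  let e := assign (s ++ c1 ++ c2) e0 in
  let sg := fun j => if j < k then j else j + size c1 in
  assign (s ++ c2) (fun j => e (sg j)) = (fun j => e (sg j)).
Proof.
move=> hk e sg; apply functional_extensionality => j.
rewrite /e /sg /assign.
case: (ltnP j (size (s ++ c2))) => hj; last by rewrite nth_default.
rewrite size_cat hk in hj.
case: (ltnP j k) => hjk.
  rewrite !nth_cat hk hjk; apply: set_nth_default; by rewrite hk.
rewrite nth_cat hk (_ : (j < k) = false); last by lia.
rewrite nth_cat hk (_ : (j + size c1 < k) = false); last by lia.
rewrite nth_cat (_ : (j + size c1 - k < size c1) = false); last by lia.
rewrite (_ : j + size c1 - k - size c1 = j - k); last by lia.
apply: set_nth_default; lia.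
Qed.

Lemma def_mono V (enc : V -> seq M) (C C' : M -> Prop) X :
  (forall z, C z -> C' z) -> Definable enc C X -> Definable enc C' X.
Proof. move=> hC [p [c [hc h]]]; exists p, c; split => // z /hc; exact: hC. Qed.

Lemma def_neg V (enc : V -> seq M) C X :
  Definable enc C X -> Definable enc C (fun v => ~ X v).
Proof. move=> [p [c [hc h]]]; exists (fImp p (fFalse L)), c; split => // v e0 /=; rewrite (h v e0); tauto. Qed.

Lemma def_conj V (enc : V -> seq M) C k X Y : (forall v, size (enc v) = k) ->
  Definable enc C X -> Definable enc C Y -> Definable enc C (fun v => X v /\ Y v).
Proof.
move=> hk [p1 [c1 [hc1 h1]]] [p2 [c2 [hc2 h2]]].
have sinj : injective (fun j => if j < k then j else j + size c1).
  move=> i j /=; case: (ltnP i k) => hi; case: (ltnP j k) => hj; lia.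
exists (fAnd p1 (fren (fun j => if j < k then j else j + size c1) p2)), (c1 ++ c2).
split; first by move=> z hz; case: (in_app_or _ _ _ hz); [apply: hc1|apply: hc2].
move=> v e0; rewrite sat_and sat_ren //.
rewrite (h1 v (assign (enc v ++ c1 ++ c2) e0)) catA assign_app -catA.
rewrite (h2 v (fun j => assign (enc v ++ c1 ++ c2) e0 (if j < k then j else j + size c1))).
by rewrite assign_shift.
Qed.

Lemma assign_lift (s t : seq M) k e0 : size s = k ->
  let e := assign (s ++ t) e0 in
  assign t (fun j => e (j + k)) = (fun j => e (j + k)).
Proof.
move=> hk e; apply functional_extensionality => j; rewrite /e /assign.
case: (ltnP j (size t)) => hj; last by rewrite nth_default.
rewrite nth_cat hk ltnNge leq_addl /= addnK; exact: set_nth_default.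
Qed.

Lemma defxy_lift n m C (Y : m.-tuple M -> Prop) :
  defx C Y -> defxy (n := n) C (fun p => Y p.2).
Proof.
move=> [p [c [hc h]]]; exists (fren (fun j => j + n) p), c; split => // v e0.
have sinj : injective (fun j => j + n) by move=> i j /=; lia.
rewrite sat_ren // -catA.
rewrite (h v.2 (fun j => assign (v.1 ++ v.2 ++ c) e0 (j + n))) assign_lift //.
exact: size_tuple.
Qed.

End Ren.

Lemma kmeasure_mono V (D D' : (V -> Prop) -> Prop) (mu : (V -> Prop) -> R) :
  (forall X, D X -> D' X) -> is_kmeasure D' mu -> is_kmeasure D mu.
Proof.
move=> h [e [nn [o a]]]; split; [|split; [|split]] => //.
- move=> X Y hX hY; exact: e (h _ hX) (h _ hY).
- move=> X hX; exact: nn (h _ hX).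
- move=> X Y hX hY; exact: a (h _ hX) (h _ hY).
Qed.

From Stdlib Require Import Lra.
Ltac peq := apply functional_extensionality => ?; apply propositional_extensionality; tauto.

Theorem proposition5p7 (L : lang) (U : structure L) (n m : nat)
  (A : U -> Prop) (b : seq U)
  (mu : (n.-tuple U -> Prop) -> R) (nu : (m.-tuple U -> Prop) -> R)
  (Phi : m.-tuple U -> Prop) :
  is_kmeasure (defx (@setTM _ U)) mu ->
  is_kmeasure (defx (@setTM _ U)) nu ->
  defx (fun z => List.In z b) Phi ->
  Rlt R0 (nu Phi) -> Rlt (nu Phi) R1 ->
  tri A mu nu ->
  tri (addparams A b) mu (localize nu Phi).
Proof.
move=> hmu hnu hPhi hpos hlt1 [lam [Hlam [Hlx [[w0 Hw0] Huniq]]]].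
have Hw0' := Hw0.
case: Hw0 => [[[w0ext [w0nn [w0one w0add]]] w0prod] [w0lam w0x]].
set r := nu Phi.
have rne : r <> R0 by apply: Rgt_not_eq.
have hk : forall v : n.-tuple U * m.-tuple U, size (tval v.1 ++ tval v.2) = n + m.
  by move=> v; rewrite size_cat !size_tuple.
have hkx : forall v : m.-tuple U, size (tval v) = m by move=> v; rewrite size_tuple.
have conjxy : forall C (X Y : n.-tuple U * m.-tuple U -> Prop),
  defxy C X -> defxy C Y -> defxy C (fun p => X p /\ Y p).
  by move=> C X Y; apply: def_conj hk.
have conjy : forall C (X Y : m.-tuple U -> Prop),
  defx C X -> defx C Y -> defx C (fun p => X p /\ Y p).
  by move=> C X Y; apply: def_conj hkx.
have toT : forall C (X : n.-tuple U * m.-tuple U -> Prop), defxy C X -> defxy (@setTM _ U) X.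
  by move=> C X; apply: def_mono.
have AAb : forall (X : n.-tuple U * m.-tuple U -> Prop), defxy A X -> defxy (addparams A b) X.
  by move=> X; apply: def_mono => z hz; left.
have PhiT : defx (@setTM _ U) Phi by apply: def_mono hPhi.
have nPhiT : defx (@setTM _ U) (fun v => ~ Phi v) by apply: def_neg.
have w0Phi : w0 (fun p => Phi p.2) = r := Huniq w0 Hw0' Phi PhiT.
have Phi2 : defxy (@setTM _ U) (fun p : n.-tuple U * m.-tuple U => Phi p.2) := defxy_lift n PhiT.
have nPhi2 : defxy (@setTM _ U) (fun p : n.-tuple U * m.-tuple U => ~ Phi p.2) := def_neg Phi2.
have split0 : forall X, defxy (@setTM _ U) X ->
    w0 X = Rplus (w0 (fun p => X p /\ Phi p.2)) (w0 (fun p => X p /\ ~ Phi p.2)).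
  move=> X hX.
  have e : X = (fun p => (X p /\ Phi p.2) \/ (X p /\ ~ Phi p.2)).
    apply functional_extensionality => p; apply propositional_extensionality.
    split; [move=> h; case: (classic (Phi p.2)); tauto | tauto].
  rewrite {1}e.
  apply: w0add; [exact: conjxy|exact: conjxy|tauto].
have w0nPhi : w0 (fun p => ~ Phi p.2) = Rminus R1 r.
  have := w0add _ _ Phi2 nPhi2 ltac:(tauto).
  have -> : (fun v : n.-tuple U * m.-tuple U => Phi v.2 \/ ~ Phi v.2) = (fun _ => True).
    apply functional_extensionality => p; apply propositional_extensionality.
    split => // _; exact: classic.
  rewrite w0one w0Phi => ->; ring.
pose w' := fun X : n.-tuple U * m.-tuple U -> Prop => Rdiv (w0 (fun p => X p /\ Phi p.2)) r.
have w'k : is_kmeasure (defxy (@setTM _ U)) w'.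
  split; [|split; [|split]].
  - move=> X Y _ _ hXY.
    have -> : X = Y by apply functional_extensionality => p; apply propositional_extensionality.
    done.
  - move=> X hX; rewrite /w'; apply: Rmult_le_pos; first by apply: w0nn; exact: conjxy.
    by apply: Rlt_le; apply: Rinv_0_lt_compat.
  - rewrite /w'.
    have -> : (fun p : n.-tuple U * m.-tuple U => True /\ Phi p.2) = (fun p => Phi p.2) by peq.
    rewrite w0Phi; field; exact: rne.
  - move=> X Y hX hY hXY; rewrite /w'.
    have -> : (fun p : n.-tuple U * m.-tuple U => (X p \/ Y p) /\ Phi p.2)
       = (fun p => (X p /\ Phi p.2) \/ (Y p /\ Phi p.2)) by peq.
    rewrite w0add; [|exact: conjxy|exact: conjxy|move=> v; move: (hXY v); tauto].
    rewrite /Rdiv; ring.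
have w'x : agree (defx (@setTM _ U)) (pi_x w') mu.
  move=> X hX; rewrite /pi_x /w' -(w0x X hX).
  rewrite (w0prod X Phi hX PhiT); rewrite /pi_y w0Phi /pi_x; field; exact: rne.
have w'am : is_am (@setTM _ U) w'.
  split => // X Y hX hY.
  rewrite /pi_x /pi_y /w'.
  have -> : (fun p : n.-tuple U * m.-tuple U => (X p.1 /\ Y p.2) /\ Phi p.2)
     = (fun p => X p.1 /\ (fun v => Y v /\ Phi v) p.2) by peq.
  rewrite (w0prod X (fun v => Y v /\ Phi v) hX (conjy _ _ _ hY PhiT)).
  rewrite (w0prod X Phi hX PhiT).
  rewrite /pi_y /pi_x w0Phi /=; field; exact: rne.
exists w'; split; [|split; [|split]].
- apply: kmeasure_mono w'k => X; exact: toT.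
- move=> X hX; apply: w'x; exact: def_mono hX.
- exists w'; split => //; split => //.
move=> w2 [[[_ [w2nn [w2one w2add]]] w2prod] [w2lam w2x]].
pose w3 := fun X : n.-tuple U * m.-tuple U -> Prop =>
  Rplus (Rmult r (w2 X)) (w0 (fun p => X p /\ ~ Phi p.2)).
have w3am : Amal A lam mu w3.
  split; [split; [split; [|split; [|split]]|] | split].
  - move=> X Y _ _ hXY.
    have -> : X = Y by apply functional_extensionality => p; apply propositional_extensionality.
    done.
  - move=> X hX; rewrite /w3; apply: Rplus_le_le_0_compat.
      apply: Rmult_le_pos; [exact: Rlt_le|exact: w2nn].
    apply: w0nn; exact: conjxy.
  - rewrite /w3 w2one.
    have -> : (fun p : n.-tuple U * m.-tuple U => True /\ ~ Phi p.2) = (fun p => ~ Phi p.2) by peq.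
    rewrite w0nPhi; ring.
  - move=> X Y hX hY hXY; rewrite /w3.
    have -> : (fun p : n.-tuple U * m.-tuple U => (X p \/ Y p) /\ ~ Phi p.2)
       = (fun p => (X p /\ ~ Phi p.2) \/ (Y p /\ ~ Phi p.2)) by peq.
    rewrite w0add; [|exact: conjxy|exact: conjxy|move=> v; move: (hXY v); tauto].
    rewrite w2add //; ring.
  - move=> X Y hX hY; rewrite /pi_x /pi_y /w3.
    have -> : (fun p : n.-tuple U * m.-tuple U => (X p.1 /\ Y p.2) /\ ~ Phi p.2)
       = (fun p => X p.1 /\ (fun v => Y v /\ ~ Phi v) p.2) by peq.
    rewrite (w0prod X _ hX (conjy _ _ _ hY nPhiT)) (w0prod X _ hX nPhiT) w2prod //.
    have e1 := w2x X hX; have e2 := w0x X hX.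
    rewrite /pi_x in e1 e2; rewrite /pi_x /pi_y e1 e2 /= w0nPhi; ring.
  - move=> X hX; rewrite /w3.
    rewrite (w2lam X (AAb X hX)) /w' -(w0lam X hX) (split0 X (toT _ _ hX)).
    field; exact: rne.
  - move=> X hX; rewrite /pi_x /w3.
    rewrite (w0prod X _ hX nPhiT).
    have e1 := w2x X hX; have e2 := w0x X hX.
    rewrite /pi_x in e1 e2; rewrite /pi_x /pi_y e1 e2 /= w0nPhi; ring.
move=> Y hY.
have h3 := Huniq w3 w3am Y hY.
have h0 := Huniq w0 Hw0' Y hY.
have hPY := Huniq w0 Hw0' (fun v => Phi v /\ Y v) (conjy _ _ _ PhiT hY).
have hs := split0 (fun p => Y p.2) (defxy_lift n hY).
rewrite /pi_y /w3 in h3 h0 hPY *.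
rewrite /localize -hPY.
have -> : (fun p : n.-tuple U * m.-tuple U => Phi p.2 /\ Y p.2) = (fun p => Y p.2 /\ Phi p.2) by peq.
rewrite -/r.
have : Rmult r (w2 (fun p => Y p.2)) = w0 (fun p => Y p.2 /\ Phi p.2).
  rewrite h0 in hs; lra.
move=> <-; field; exact: rne.
Qed.
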